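(* For every real $s$, the measures $\Phi_s(P\|Q)$, $\Omega_s(P\|Q)$ and $\Omega_s(Q\|P)$ are nonnegative and jointly convex in the pair $(P,Q)\in\Gamma_n\times\Gamma_n$; and for every $s\in[0,4]$, the measures $\zeta_s(P\|Q)$ and $\zeta_s(Q\|P)$ are nonnegative and jointly convex in $(P,Q)\in\Gamma_n\times\Gamma_n$.
   Context: $\Gamma_n=\{P=(p_1,\dots,p_n): p_i>0,\ \sum_i p_i=1\}$, $n\ge2$. For $P,Q\in\Gamma_n$ and $s\in\mathbb{R}$: $\Phi_s(P\|Q)=[s(s-1)]^{-1}\big[\sum_i p_i^s q_i^{1-s}-1\big]$ for $s\ne0,1$; $\Phi_0(P\|Q)=\sum_i q_i\ln(q_i/p_i)$; $\Phi_1(P\|Q)=\sum_i p_i\ln(p_i/q_i)$. $\Omega_s(P\|Q)=[s(s-1)]^{-1}\big[\sum_i p_i\big(\frac{p_i+q_i}{2p_i}\big)^s-1\big]$ for $s\ne0,1$; $\Omega_0(P\|Q)=\sum_i p_i\ln\frac{2p_i}{p_i+q_i}$; $\Omega_1(P\|Q)=\sum_i\frac{p_i+q_i}{2}\ln\frac{p_i+q_i}{2p_i}$. $\zeta_s(P\|Q)=(s-1)^{-1}\sum_i(p_i-q_i)\big(\frac{p_i+q_i}{2q_i}\big)^{s-1}$ for $s\ne1$; $\zeta_1(P\|Q)=\sum_i(p_i-q_i)\ln\frac{p_i+q_i}{2q_i}$. $\Omega_s(Q\|P)$ and $\zeta_s(Q\|P)$ are obtained by interchanging the roles of $p_i$ and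 $q_i$. *)

(* Defs.v *)
From mathcomp Require Import all_boot all_order all_algebra.
From mathcomp Require Import reals exp.
Set Implicit Arguments. Unset Strict Implicit. Unset Printing Implicit Defensive.
Import Order.TTheory GRing.Theory Num.Theory.
Local Open Scope ring_scope.

Section Defs.
Variable R : realType.
Variable n : nat.

Definition Gamma (p : 'I_n -> R) : Prop :=
  (forall i, 0 < p i) /\ \sum_(i < n) p i = 1.

Definition Phi (s : R) (p q : 'I_n -> R) : R :=
  if s == 0 then \sum_(i < n) q i * ln (q i / p i)
  else if s == 1 then \sum_(i < n) p i * ln (p i / q i)
  else (s * (s - 1))^-1 *
       (\sum_(i < n) (p i `^ s) * (q i `^ (1 - s)) - 1).

Definition Omega (s : R) (p q : 'I_n -> R) : R :=
  if s == 0 then \sum_(i < n) p i * ln (2 * p i / (p i + q i))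
  else if s == 1 then
    \sum_(i < n) (p i + q i) / 2 * ln ((p i + q i) / (2 * p i))
  else (s * (s - 1))^-1 *
       (\sum_(i < n) p i * (((p i + q i) / (2 * p i)) `^ s) - 1).

Definition zeta (s : R) (p q : 'I_n -> R) : R :=
  if s == 1 then \sum_(i < n) (p i - q i) * ln ((p i + q i) / (2 * q i))
  else (s - 1)^-1 *
       \sum_(i < n) (p i - q i) * (((p i + q i) / (2 * q i)) `^ (s - 1)).

Definition mix (t : R) (p1 p2 : 'I_n -> R) : 'I_n -> R :=
  fun i => t * p1 i + (1 - t) * p2 i.

Definition nonneg_on_Gamma (F : ('I_n -> R) -> ('I_n -> R) -> R) : Prop :=
  forall p q, Gamma p -> Gamma q -> 0 <= F p q.

Definition jointly_convex (F : ('I_n -> R) -> ('I_n -> R) -> R) : Prop :=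
  forall p1 q1 p2 q2 (t : R), Gamma p1 -> Gamma q1 -> Gamma p2 -> Gamma q2 ->
    0 <= t <= 1 ->
    F (mix t p1 p2) (mix t q1 q2) <= t * F p1 q1 + (1 - t) * F p2 q2.

End Defs.

Arguments Gamma {R} n p.
Arguments Phi {R n} s p q.
Arguments Omega {R n} s p q.
Arguments zeta {R n} s p q.
Arguments mix {R n} t p1 p2.
Arguments nonneg_on_Gamma {R} n F.
Arguments jointly_convex {R} n F.

(* Main.v *)
Require Import Defs.
From mathcomp Require Import all_boot all_order all_algebra.
From mathcomp Require Import reals exp.
From mathcomp Require Import ring lra.
From mathcomp Require Import boolp classical_sets functions topology normedtype derive realfun.
Import Order.TTheory GRing.Theory Num.Theory numFieldNormedType.Exports.
Local Open Scope ring_scope.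
Set Implicit Arguments. Unset Strict Implicit. Unset Printing Implicit Defensive.

Section S0.
Variable R : realType.

Lemma mono_aux (f df : R -> R) (a x y : R) :
  (forall z, a < z -> is_derive z 1 f (df z)) -> a < x -> x <= y ->
  (forall z, x < z -> z < y -> 0 <= df z) -> f x <= f y.
Proof.
move=> Hd ax xy Hpos.
have Hz z : x <= z -> a < z by move=> xz; exact: lt_le_trans ax xz.
have Hder z : x <= z -> derivable f z 1 by move=> /Hz /Hd [].
apply: (@ger0_derive1_ndecr R f x y) => //.
- by move=> z; rewrite in_itv /= => /andP[xz _]; apply: Hder; exact: ltW.
- move=> z; rewrite in_itv /= => /andP[xz zy].
  by rewrite derive1E; have [_ ->] := Hd z (Hz z (ltW xz)); apply: Hpos.
- apply: derivable_within_continuous => z; rewrite in_itv /= => /andP[xz _].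
  exact: Hder.
Qed.
End S0.
Section S2.
Variable R : realType.

Lemma is_derive_subl (f : R -> R) (df c z : R) : is_derive z 1 f df ->
  is_derive z 1 (fun u => f u - c * u) (df - c).
Proof.
move=> H.
have -> : (fun u => f u - c * u) = f - (c \*: id) by [].
apply: is_derive_eq.
by rewrite -[c%:A]mulr1 mulr_algl scaler1 /=.
Qed.

Lemma is_derive_subr (f : R -> R) (df c z : R) : is_derive z 1 f df ->
  is_derive z 1 (fun u => c * u - f u) (c - df).
Proof.
move=> H.
have -> : (fun u => c * u - f u) = (c \*: id) - f by [].
apply: is_derive_eq.
by rewrite -[c%:A]mulr1 mulr_algl scaler1 /=.
Qed.

Lemma support (f df ddf : R -> R) (a b u : R) :
  (forall z, a < z -> is_derive z 1 f (df z)) ->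
  (forall z, a < z -> is_derive z 1 df (ddf z)) ->
  (forall z, a < z -> 0 <= ddf z) ->
  a < b -> a < u -> f b + df b * (u - b) <= f u.
Proof.
move=> Hf Hdf Hddf ab au.
have Hh : forall z, a < z -> is_derive z 1 (fun u => f u - df b * u) (df z - df b).
  by move=> z az; apply: is_derive_subl; exact: Hf.
have [bu|ub] := leP b u.
- have := @mono_aux _ (fun u => f u - df b * u) (fun z => df z - df b) a b u Hh ab bu.
  have H : forall z, b < z -> z < u -> 0 <= df z - df b.
    move=> z bz zu; rewrite subr_ge0.
    apply: (@mono_aux _ df ddf a b z Hdf ab (ltW bz)) => w bw _.
    apply: Hddf; exact: lt_trans ab bw.
  move=> /(_ H) /=. 
  rewrite -subr_ge0 => h; rewrite -subr_ge0.
  have -> : f u - (f b + df b * (u - b)) = f u - df b * u - (f b - df b * b) by ring.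
  by [].
- have Hk : forall z, a < z -> is_derive z 1 (fun u => df b * u - f u) (df b - df z).
    by move=> z az; apply: is_derive_subr; exact: Hf.
  have := @mono_aux _ (fun u => df b * u - f u) (fun z => df b - df z) a u b Hk au (ltW ub).
  have H : forall z, u < z -> z < b -> 0 <= df b - df z.
    move=> z uz zb; rewrite subr_ge0.
    apply: (@mono_aux _ df ddf a z b Hdf (lt_trans au uz) (ltW zb)) => w zw _.
    apply: Hddf; exact: lt_trans au (lt_trans uz zw).
  move=> /(_ H) /= h; rewrite -subr_ge0.
  have -> : f u - (f b + df b * (u - b)) = (df b * b - f b) - (df b * u - f u) by ring.
  by rewrite subr_ge0.
Qed.
End S2.
Section S3.
Variable R : realType.

Definition good (g : R -> R) (a : R) := exists df ddf : R -> R,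
  [/\ (forall z, a < z -> is_derive z 1 g (df z)),
      (forall z, a < z -> is_derive z 1 df (ddf z)) &
      (forall z, a < z -> 0 <= ddf z)].

Lemma good_support g a : good g a -> a < 1 ->
  exists c, forall u, a < u -> g 1 + c * (u - 1) <= g u.
Proof.
move=> [df [ddf [H1 H2 H3]]] a1; exists (df 1) => u au.
exact: (support H1 H2 H3 a1 au).
Qed.

Lemma convcomb_gt (a x y t : R) : a < x -> a < y -> 0 <= t -> t <= 1 ->
  a < t * x + (1 - t) * y.
Proof.
move=> ax ay t0 t1.
have [->|tp] := eqVneq t 0; first by rewrite mul0r add0r subr0 mul1r.
have tp' : 0 < t by rewrite lt_neqAle eq_sym tp t0.
nra.
Qed.

Lemma good_convex g a : good g a -> forall x y t, a < x -> a < y ->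
  0 <= t -> t <= 1 -> g (t * x + (1 - t) * y) <= t * g x + (1 - t) * g y.
Proof.
move=> [df [ddf [H1 H2 H3]]] x y t ax ay t0 t1.
set z := t * x + (1 - t) * y.
have az : a < z by apply: convcomb_gt.
have hx := support H1 H2 H3 az ax.
have hy := support H1 H2 H3 az ay.
have t0' : 0 <= 1 - t by rewrite subr_ge0.
have hx' := ler_wpM2l t0 hx.
have hy' := ler_wpM2l t0' hy.
have -> : g z = t * (g z + df z * (x - z)) + (1 - t) * (g z + df z * (y - z)).
  rewrite /z; ring.
exact: lerD.
Qed.

Lemma persp_convex g a : good g a -> forall x1 y1 x2 y2 t,
  0 < y1 -> 0 < y2 -> a < x1 / y1 -> a < x2 / y2 -> 0 <= t -> t <= 1 ->
  (t * y1 + (1 - t) * y2) * g ((t * x1 + (1 - t) * x2) / (t * y1 + (1 - t) * y2))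
  <= t * (y1 * g (x1 / y1)) + (1 - t) * (y2 * g (x2 / y2)).
Proof.
move=> gg x1 y1 x2 y2 t y10 y20 a1 a2 t0 t1.
set Y := t * y1 + (1 - t) * y2.
have Y0 : 0 < Y by apply: (@convcomb_gt 0).
set l := t * y1 / Y.
have l0 : 0 <= l by apply: divr_ge0; [apply: mulr_ge0 => //; exact: ltW | exact: ltW].
have l1 : l <= 1.
  rewrite /l ler_pdivrMr // mul1r /Y lerDl; apply: mulr_ge0; [by rewrite subr_ge0 | exact: ltW].
have E : (t * x1 + (1 - t) * x2) / Y = l * (x1 / y1) + (1 - l) * (x2 / y2).
  rewrite /l /Y; field.
  by rewrite (gt_eqF y10) (gt_eqF y20) (gt_eqF Y0).
rewrite E.
have := good_convex gg a1 a2 l0 l1.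
move=> /(ler_wpM2l (ltW Y0)).
have -> : Y * (l * g (x1 / y1) + (1 - l) * g (x2 / y2)) =
   t * (y1 * g (x1 / y1)) + (1 - t) * (y2 * g (x2 / y2)).
  rewrite /l /Y; field.
  by rewrite (gt_eqF Y0).
by [].
Qed.
End S3.


Section S4.
Variable R : realType.
Variable n : nat.
Implicit Types p q : 'I_n -> R.

Lemma Gamma_mix p1 p2 (t : R) : Gamma n p1 -> Gamma n p2 -> 0 <= t -> t <= 1 ->
  Gamma n (mix t p1 p2).
Proof.
move=> [h1 s1] [h2 s2] t0 t1; split.
  by move=> i; apply: (@convcomb_gt _ 0).
rewrite /mix big_split /= -!mulr_sumr s1 s2; ring.
Qed.

Lemma jc_ext (F G : ('I_n -> R) -> ('I_n -> R) -> R) :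
  (forall p q, Gamma n p -> Gamma n q -> F p q = G p q) ->
  jointly_convex n G -> jointly_convex n F.
Proof.
move=> E HG p1 q1 p2 q2 t g1 g2 g3 g4 /andP[t0 t1].
rewrite !E //; try exact: Gamma_mix.
  by apply: HG => //; rewrite t0 t1.
Qed.

Lemma nn_ext (F G : ('I_n -> R) -> ('I_n -> R) -> R) :
  (forall p q, Gamma n p -> Gamma n q -> F p q = G p q) ->
  nonneg_on_Gamma n G -> nonneg_on_Gamma n F.
Proof. by move=> E HG p q gp gq; rewrite E //; apply: HG. Qed.

Definition lin (X : ('I_n -> R) -> ('I_n -> R) -> 'I_n -> R) :=
  forall p1 q1 p2 q2 (t : R) i,
    X (mix t p1 p2) (mix t q1 q2) i = t * X p1 q1 i + (1 - t) * X p2 q2 i.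

Lemma sum_convex (g : R -> R) a (X Y : ('I_n -> R) -> ('I_n -> R) -> 'I_n -> R) :
  good g a -> lin X -> lin Y ->
  (forall p q i, Gamma n p -> Gamma n q -> 0 < Y p q i /\ a < X p q i / Y p q i) ->
  jointly_convex n (fun p q => \sum_i Y p q i * g (X p q i / Y p q i)).
Proof.
move=> gg LX LY pos p1 q1 p2 q2 t g1 g2 g3 g4 /andP[t0 t1] /=.
rewrite !mulr_sumr -big_split /=; apply: ler_sum => i _.
rewrite LX LY.
have [y1 a1] := pos _ _ i g1 g2.
have [y2 a2] := pos _ _ i g3 g4.
exact: persp_convex gg _ _ _ _ _ y1 y2 a1 a2 t0 t1.
Qed.

Lemma sum_nonneg (g : R -> R) a (X Y : ('I_n -> R) -> ('I_n -> R) -> 'I_n -> R) :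
  good g a -> a < 1 -> g 1 = 0 ->
  (forall p q i, Gamma n p -> Gamma n q -> 0 < Y p q i /\ a < X p q i / Y p q i) ->
  (forall p q, Gamma n p -> Gamma n q -> \sum_i X p q i = \sum_i Y p q i) ->
  nonneg_on_Gamma n (fun p q => \sum_i Y p q i * g (X p q i / Y p q i)).
Proof.
move=> gg a1 g1 pos S p q gp gq /=.
have [c Hc] := good_support gg a1.
apply: (@le_trans _ _ (\sum_i c * (X p q i - Y p q i))).
  by rewrite -mulr_sumr sumrB S // subrr mulr0.
apply: ler_sum => i _.
have [y0 ax] := pos _ _ i gp gq.
have := ler_wpM2l (ltW y0) (Hc _ ax).
rewrite g1 add0r; apply: le_trans; rewrite le_eqVlt; apply/orP; left; apply/eqP.
field; by rewrite gt_eqF.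
Qed.
End S4.


Section S5.
Variable R : realType.

Definition gP (s u : R) := (s * (s - 1))^-1 * (u `^ s - 1).

Lemma good_gP s : s != 0 -> s != 1 -> good (gP s) 0.
Proof.
move=> s0 s1; set k := (s * (s - 1))^-1.
exists (fun u => k * (s * u `^ (s - 1))).
exists (fun u => k * (s * ((s - 1) * u `^ (s - 1 - 1)))).
split => z z0.
- have -> : gP s = k \*: ((@powR R ^~ s) - cst 1) by [].
  apply: is_derive_eq.
    by apply: is_deriveZ; apply: is_deriveB; exact: is_derive1_powR.
  by change (k * (s * z `^ (s - 1) - 0) = k * (s * z `^ (s - 1))); rewrite subr0.
- have -> : (fun u => k * (s * u `^ (s - 1))) = k \*: (s \*: (@powR R ^~ (s - 1))) by [].
  apply: is_derive_eq.
    by apply: is_deriveZ; apply: is_deriveZ; exact: is_derive1_powR.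
  by [].
- rewrite mulrA mulrA /k mulVf ?mul1r ?powR_ge0 //.
  by rewrite mulf_neq0 // subr_eq0.
Qed.

Definition gP0 (u : R) := - ln u.

Lemma good_gP0 : good gP0 0.
Proof.
exists (fun u => - u^-1); exists (fun u => (u ^+ 2)^-1).
split => z z0.
- have -> : gP0 = - (@ln R) by [].
  apply: is_derive_eq.
    by apply: is_deriveN; exact: is_derive1_ln.
  by [].
- have -> : (fun u : R => - u^-1) = - (fun y => (@id R y)^-1) by [].
  apply: is_derive_eq.
    apply: is_deriveN; apply: is_deriveV.
    by rewrite gt_eqF.
  by change (- (- (z ^+ 2)^-1 * 1) = (z ^+ 2)^-1); rewrite mulr1 opprK.
- by rewrite invr_ge0 sqr_ge0.
Qed.

Definition gP1 (u : R) := u * ln u.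

Lemma good_gP1 : good gP1 0.
Proof.
exists (fun u => ln u + 1); exists (fun u => u^-1).
split => z z0.
- have -> : gP1 = (@id R) * (@ln R) by [].
  apply: is_derive_eq.
    by apply: is_deriveM; try exact: is_derive1_ln.
  change (z * z^-1 + ln z * 1 = ln z + 1).
  by rewrite mulfV ?gt_eqF // mulr1 addrC.
- have -> : (fun u : R => ln u + 1) = (@ln R) + cst 1 by [].
  apply: is_derive_eq.
    by apply: is_deriveD; try exact: is_derive1_ln.
  by change (z^-1 + 0 = z^-1); rewrite addr0.
- by rewrite invr_ge0 ltW.
Qed.

Definition gZ (s v : R) := (2 / (s - 1)) * (v `^ s - v `^ (s - 1)).

Lemma good_gZ s : 0 <= s -> s <= 4 -> s != 1 -> good (gZ s) (1/2).
Proof.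
move=> s0 s4 s1; set k := 2 / (s - 1).
exists (fun v => k * (s * v `^ (s - 1) - (s - 1) * v `^ (s - 1 - 1))).
exists (fun v => k * (s * ((s - 1) * v `^ (s - 1 - 1)) -
                     (s - 1) * ((s - 1 - 1) * v `^ (s - 1 - 1 - 1)))).
split => z z0.
- have zp : 0 < z by apply: (lt_trans _ z0); rewrite divr_gt0.
  have -> : gZ s = k \*: ((@powR R ^~ s) - (@powR R ^~ (s - 1))) by [].
  apply: is_derive_eq.
    by apply: is_deriveZ; apply: is_deriveB; exact: is_derive1_powR.
  by [].
- have zp : 0 < z by apply: (lt_trans _ z0); rewrite divr_gt0.
  have -> : (fun v => k * (s * v `^ (s - 1) - (s - 1) * v `^ (s - 1 - 1))) =
     k \*: (s \*: (@powR R ^~ (s - 1)) - (s - 1) \*: (@powR R ^~ (s - 1 - 1))) by [].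
  exact: (is_deriveZ k (is_deriveB (is_deriveZ s (is_derive1_powR (s - 1) zp))
            (is_deriveZ (s - 1) (is_derive1_powR (s - 1 - 1) zp)))).
- have zp : 0 < z by apply: (lt_trans _ z0); rewrite divr_gt0.
  set w := z `^ (s - 1 - 1 - 1).
  have w0 : 0 <= w by apply: powR_ge0.
  have -> : z `^ (s - 1 - 1) = w * z.
    rewrite /w -{3}(powRr1 (ltW zp)) -powRD; first by congr (_ `^ _); ring.
    by apply/implyP => _; rewrite gt_eqF.
  have -> : k * (s * ((s - 1) * (w * z)) - (s - 1) * ((s - 1 - 1) * w)) =
            2 * w * (s * z - s + 2).
    rewrite /k; field; by rewrite subr_eq0.
  apply: mulr_ge0; first by apply: mulr_ge0.
  have h : 0 <= s * (z - 1/2) by apply: mulr_ge0 => //; rewrite subr_ge0 ltW.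
  lra.
Qed.

Definition gZ1 (v : R) := 2 * ((v - 1) * ln v).

Lemma good_gZ1 : good gZ1 (1/2).
Proof.
exists (fun v => 2 * (ln v + 1 - v^-1)).
exists (fun v => 2 * (v^-1 + (v ^+ 2)^-1)).
split => z z0; have zp : 0 < z by apply: (lt_trans _ z0); rewrite divr_gt0.
- have -> : gZ1 = 2 \*: (((@id R) - cst 1) * (@ln R)) by [].
  apply: is_derive_eq.
    by apply: is_deriveZ; apply: is_deriveM; try exact: is_derive1_ln.
  change (2 * ((z - 1) * z^-1 + ln z * (1 - 0)) = 2 * (ln z + 1 - z^-1)).
  by field; rewrite gt_eqF.
- have -> : (fun v => 2 * (ln v + 1 - v^-1)) =
     2 \*: ((@ln R) + cst 1 - (fun y => (@id R y)^-1)) by [].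
  apply: is_derive_eq.
    apply: is_deriveZ; apply: is_deriveB.
      by apply: is_deriveD; try exact: is_derive1_ln.
    by apply: is_deriveV; rewrite gt_eqF.
  change (2 * (z^-1 + 0 - (- (z ^+ 2)^-1 * 1)) = 2 * (z^-1 + (z ^+ 2)^-1)).
  by rewrite addr0 mulr1 opprK.
- by apply: mulr_ge0 => //; apply: addr_ge0; rewrite invr_ge0 ?sqr_ge0 ?ltW.
Qed.
End S5.


Section S6.
Variable R : realType.
Variable n : nat.
Implicit Types p q : 'I_n -> R.

Lemma pack (g : R -> R) a (X Y : ('I_n -> R) -> ('I_n -> R) -> 'I_n -> R)
  (F : ('I_n -> R) -> ('I_n -> R) -> R) :
  good g a -> a < 1 -> g 1 = 0 -> lin X -> lin Y ->
  (forall p q i, Gamma n p -> Gamma n q -> 0 < Y p q i /\ a < X p q i / Y p q i) ->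
  (forall p q, Gamma n p -> Gamma n q -> \sum_i X p q i = \sum_i Y p q i) ->
  (forall p q, Gamma n p -> Gamma n q ->
     F p q = \sum_i Y p q i * g (X p q i / Y p q i)) ->
  nonneg_on_Gamma n F /\ jointly_convex n F.
Proof.
move=> gg a1 g1 LX LY pos S E; split.
  by apply: (nn_ext E); apply: sum_nonneg gg a1 g1 pos S.
by apply: (jc_ext E); apply: sum_convex gg LX LY pos.
Qed.

Definition XP p q i := p i.
Definition YP p q i := q i.
Definition XM p q i := (p i + q i) / 2.

Lemma lin_XP : lin XP. Proof. by []. Qed.
Lemma lin_YP : lin YP. Proof. by []. Qed.
Lemma lin_XM : lin XM. Proof. by move=> *; rewrite /XM /mix; ring. Qed.

Lemma pos_P p q i : Gamma n p -> Gamma n q -> 0 < YP p q i /\ 0 < XP p q i / YP p q i.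
Proof. by move=> [hp _] [hq _]; split => //; rewrite divr_gt0. Qed.

Lemma pos_Mq p q i : Gamma n p -> Gamma n q -> 0 < YP p q i /\ 1/2 < XM p q i / YP p q i.
Proof.
move=> [hp _] [hq _]; split => //.
rewrite /XM /YP ltr_pdivlMr //.
have := hp i; have := hq i; lra.
Qed.

Lemma pos_Mp p q i : Gamma n p -> Gamma n q -> 0 < XP p q i /\ 1/2 < XM p q i / XP p q i.
Proof.
move=> [hp _] [hq _]; split => //.
rewrite /XM /XP ltr_pdivlMr //.
have := hp i; have := hq i; lra.
Qed.

Lemma half_lt1 : (1/2 : R) < 1. Proof. lra. Qed.

Lemma sum_XM_q p q : Gamma n p -> Gamma n q -> \sum_i XM p q i = \sum_i YP p q i.
Proof.
move=> [_ sp] [_ sq]; rewrite /XM /YP -mulr_suml big_split /= sp sq; lra.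
Qed.

Lemma sum_XM_p p q : Gamma n p -> Gamma n q -> \sum_i XM p q i = \sum_i XP p q i.
Proof.
move=> [_ sp] [_ sq]; rewrite /XM /XP -mulr_suml big_split /= sp sq; lra.
Qed.

Lemma sum_XP p q : Gamma n p -> Gamma n q -> \sum_i XP p q i = \sum_i YP p q i.
Proof. by move=> [_ sp] [_ sq]; rewrite /XP /YP sp sq. Qed.

Lemma gP_1 (s : R) : gP s 1 = 0.
Proof. by rewrite /gP powR1 subrr mulr0. Qed.
Lemma gP0_1 : gP0 (1 : R) = 0.
Proof. by rewrite /gP0 ln1 oppr0. Qed.
Lemma gP1_1 : gP1 (1 : R) = 0.
Proof. by rewrite /gP1 ln1 mulr0. Qed.
Lemma gZ_1 (s : R) : gZ s 1 = 0.
Proof. by rewrite /gZ !powR1 subrr mulr0. Qed.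
Lemma gZ1_1 : gZ1 (1 : R) = 0.
Proof. by rewrite /gZ1 ln1 !mulr0. Qed.
End S6.


Section S7.
Variable R : realType.

Lemma powkey (x y s : R) : 0 < x -> 0 < y -> y * (x / y) `^ s = x `^ s * y `^ (1 - s).
Proof.
move=> x0 y0.
rewrite powRM ?ltW ?invr_ge0 //.
rewrite -powR_inv1 ?ltW // -powRrM mulN1r mulrCA; congr (_ * _).
rewrite powRD ?powRr1 ?ltW //.
  by apply/implyP => _; rewrite gt_eqF.
by rewrite invr_gt0.
Qed.

Lemma powS (w s : R) : 0 < w -> w `^ s = w * w `^ (s - 1).
Proof.
move=> w0; transitivity (w `^ (1 + (s - 1))); first by rewrite addrC subrK.
rewrite [LHS]powRD ?powRr1 ?ltW //.
by apply/implyP => _; rewrite gt_eqF.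
Qed.

Lemma negln (x y : R) : 0 < x -> 0 < y -> - ln (x / y) = ln (y / x).
Proof.
move=> x0 y0; rewrite -[y / x]invf_div lnV ?opprK // posrE divr_gt0 //.
Qed.
End S7.


Section S8.
Variable R : realType.
Variable n : nat.
Implicit Types p q : 'I_n -> R.

Lemma EP0 p q : Gamma n p -> Gamma n q ->
  Phi 0 p q = \sum_i YP p q i * gP0 (XP p q i / YP p q i).
Proof.
move=> [hp _] [hq _]; rewrite /Phi eqxx; apply: eq_bigr => i _.
by rewrite /gP0 /XP /YP negln.
Qed.

Lemma EP1 p q : Gamma n p -> Gamma n q ->
  Phi 1 p q = \sum_i YP p q i * gP1 (XP p q i / YP p q i).
Proof.
move=> [hp _] [hq _]; rewrite /Phi oner_eq0 eqxx; apply: eq_bigr => i _.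
by rewrite /gP1 /XP /YP mulrA [q i * _]mulrC divfK // gt_eqF.
Qed.

Lemma EPs (s : R) p q : s != 0 -> s != 1 -> Gamma n p -> Gamma n q ->
  Phi s p q = \sum_i YP p q i * gP s (XP p q i / YP p q i).
Proof.
move=> s0 s1 [hp _] [hq sq]; rewrite /Phi (negbTE s0) (negbTE s1).
rewrite [RHS](eq_bigr (fun i => (s * (s - 1))^-1 * (p i `^ s * q i `^ (1 - s))
                          - (s * (s - 1))^-1 * q i)); last first.
  move=> i _; rewrite /gP /XP /YP -powkey //; ring.
by rewrite sumrB -!mulr_sumr sq mulrBr mulr1.
Qed.

Lemma EO0 p q : Gamma n p -> Gamma n q ->
  Omega 0 p q = \sum_i XP p q i * gP0 (XM p q i / XP p q i).
Proof.
move=> [hp _] [hq _]; rewrite /Omega eqxx; apply: eq_bigr => i _.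
have h0 : 0 < (p i + q i) / 2 by rewrite divr_gt0 // addr_gt0.
rewrite /gP0 /XP /XM negln //; congr (_ * ln _).
by field; rewrite gt_eqF // addr_gt0.
Qed.

Lemma EO1 p q : Gamma n p -> Gamma n q ->
  Omega 1 p q = \sum_i XP p q i * gP1 (XM p q i / XP p q i).
Proof.
move=> [hp _] [hq _]; rewrite /Omega oner_eq0 eqxx; apply: eq_bigr => i _.
rewrite /gP1 /XP /XM.
have -> : (p i + q i) / (2 * p i) = (p i + q i) / 2 / p i.
  by field; rewrite gt_eqF.
set L := ln _; field; by rewrite gt_eqF.
Qed.

Lemma EOs (s : R) p q : s != 0 -> s != 1 -> Gamma n p -> Gamma n q ->
  Omega s p q = \sum_i XP p q i * gP s (XM p q i / XP p q i).
Proof.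
move=> s0 s1 [hp sp] [hq _]; rewrite /Omega (negbTE s0) (negbTE s1).
rewrite [RHS](eq_bigr (fun i => (s * (s - 1))^-1 * (p i * ((p i + q i) / (2 * p i)) `^ s)
                          - (s * (s - 1))^-1 * p i)); last first.
  move=> i _; rewrite /gP /XP /XM.
  have -> : (p i + q i) / (2 * p i) = (p i + q i) / 2 / p i.
    by field; rewrite gt_eqF.
  ring.
by rewrite sumrB -!mulr_sumr sp mulrBr mulr1.
Qed.

Lemma EO0' p q : Gamma n p -> Gamma n q ->
  Omega 0 q p = \sum_i YP p q i * gP0 (XM p q i / YP p q i).
Proof.
move=> [hp _] [hq _]; rewrite /Omega eqxx; apply: eq_bigr => i _.
have h0 : 0 < (p i + q i) / 2 by rewrite divr_gt0 // addr_gt0.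
rewrite /gP0 /YP /XM negln //; congr (_ * ln _).
by field; rewrite gt_eqF // addr_gt0.
Qed.

Lemma EO1' p q : Gamma n p -> Gamma n q ->
  Omega 1 q p = \sum_i YP p q i * gP1 (XM p q i / YP p q i).
Proof.
move=> [hp _] [hq _]; rewrite /Omega oner_eq0 eqxx; apply: eq_bigr => i _.
rewrite /gP1 /YP /XM.
have -> : (q i + p i) / (2 * q i) = (p i + q i) / 2 / q i.
  by field; rewrite gt_eqF.
set L := ln _; field; by rewrite gt_eqF.
Qed.

Lemma EOs' (s : R) p q : s != 0 -> s != 1 -> Gamma n p -> Gamma n q ->
  Omega s q p = \sum_i YP p q i * gP s (XM p q i / YP p q i).
Proof.
move=> s0 s1 [hp _] [hq sq]; rewrite /Omega (negbTE s0) (negbTE s1).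
rewrite [RHS](eq_bigr (fun i => (s * (s - 1))^-1 * (q i * ((q i + p i) / (2 * q i)) `^ s)
                          - (s * (s - 1))^-1 * q i)); last first.
  move=> i _; rewrite /gP /YP /XM.
  have -> : (q i + p i) / (2 * q i) = (p i + q i) / 2 / q i.
    by field; rewrite gt_eqF.
  ring.
by rewrite sumrB -!mulr_sumr sq mulrBr mulr1.
Qed.

Lemma EZ1 p q : Gamma n p -> Gamma n q ->
  zeta 1 p q = \sum_i YP p q i * gZ1 (XM p q i / YP p q i).
Proof.
move=> [hp _] [hq _]; rewrite /zeta eqxx; apply: eq_bigr => i _.
rewrite /gZ1 /YP /XM.
have -> : (p i + q i) / (2 * q i) = (p i + q i) / 2 / q i.
  by field; rewrite gt_eqF.
set L := ln _; field; by rewrite gt_eqF.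
Qed.

Lemma EZ1' p q : Gamma n p -> Gamma n q ->
  zeta 1 q p = \sum_i XP p q i * gZ1 (XM p q i / XP p q i).
Proof.
move=> [hp _] [hq _]; rewrite /zeta eqxx; apply: eq_bigr => i _.
rewrite /gZ1 /XP /XM.
have -> : (q i + p i) / (2 * p i) = (p i + q i) / 2 / p i.
  by field; rewrite gt_eqF.
set L := ln _; field; by rewrite gt_eqF.
Qed.

Lemma EZs (s : R) p q : s != 1 -> Gamma n p -> Gamma n q ->
  zeta s p q = \sum_i YP p q i * gZ s (XM p q i / YP p q i).
Proof.
move=> s1 [hp _] [hq _]; rewrite /zeta (negbTE s1) mulr_sumr; apply: eq_bigr => i _.
rewrite /gZ /YP /XM.
have -> : (p i + q i) / (2 * q i) = (p i + q i) / 2 / q i.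
  by field; rewrite gt_eqF.
have w0 : 0 < (p i + q i) / 2 / q i by rewrite !divr_gt0 // addr_gt0.
rewrite (powS s w0).
set W := _ `^ (s - 1); field.
by rewrite gt_eqF // subr_eq0.
Qed.

Lemma EZs' (s : R) p q : s != 1 -> Gamma n p -> Gamma n q ->
  zeta s q p = \sum_i XP p q i * gZ s (XM p q i / XP p q i).
Proof.
move=> s1 [hp _] [hq _]; rewrite /zeta (negbTE s1) mulr_sumr; apply: eq_bigr => i _.
rewrite /gZ /XP /XM.
have -> : (q i + p i) / (2 * p i) = (p i + q i) / 2 / p i.
  by field; rewrite gt_eqF.
have w0 : 0 < (p i + q i) / 2 / p i by rewrite !divr_gt0 // addr_gt0.
rewrite (powS s w0).
set W := _ `^ (s - 1); field.
by rewrite gt_eqF // subr_eq0.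
Qed.
End S8.


Lemma good_half (R : realType) (g : R -> R) : good g 0 -> good g (1/2).
Proof.
move=> [df [ddf [H1 H2 H3]]]; exists df, ddf.
have h z : 1/2 < z -> 0 < z by move=> hz; apply: (lt_trans _ hz); rewrite divr_gt0.
by split => z /h; [apply: H1 | apply: H2 | apply: H3].
Qed.

Theorem mainTheorem2 (R : realType) (n : nat) (hn : (2 <= n)%N) :
  (forall s : R,
     (nonneg_on_Gamma n (Phi s) /\ jointly_convex n (Phi s)) /\
     (nonneg_on_Gamma n (Omega s) /\ jointly_convex n (Omega s)) /\
     (nonneg_on_Gamma n (fun p q => Omega s q p) /\
      jointly_convex n (fun p q => Omega s q p))) /\
  (forall s : R, 0 <= s <= 4 ->
     (nonneg_on_Gamma n (zeta s) /\ jointly_convex n (zeta s)) /\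
     (nonneg_on_Gamma n (fun p q => zeta s q p) /\
      jointly_convex n (fun p q => zeta s q p))).
Proof.
split => [s|s /andP[s0 s4]].
- have [->|s0] := eqVneq s 0.
    split; [|split].
    + exact: (pack (@good_gP0 R) ltr01 (@gP0_1 R) (@lin_XP R n) (@lin_YP R n) (@pos_P R n) (@sum_XP R n) (@EP0 R n)).
    + exact: (pack (good_half (@good_gP0 R)) (@half_lt1 R) (@gP0_1 R) (@lin_XM R n) (@lin_XP R n) (@pos_Mp R n) (@sum_XM_p R n) (@EO0 R n)).
    + exact: (pack (good_half (@good_gP0 R)) (@half_lt1 R) (@gP0_1 R) (@lin_XM R n) (@lin_YP R n) (@pos_Mq R n) (@sum_XM_q R n) (@EO0' R n)).
  have [->|s1] := eqVneq s 1.
    split; [|split].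
    + exact: (pack (@good_gP1 R) ltr01 (@gP1_1 R) (@lin_XP R n) (@lin_YP R n) (@pos_P R n) (@sum_XP R n) (@EP1 R n)).
    + exact: (pack (good_half (@good_gP1 R)) (@half_lt1 R) (@gP1_1 R) (@lin_XM R n) (@lin_XP R n) (@pos_Mp R n) (@sum_XM_p R n) (@EO1 R n)).
    + exact: (pack (good_half (@good_gP1 R)) (@half_lt1 R) (@gP1_1 R) (@lin_XM R n) (@lin_YP R n) (@pos_Mq R n) (@sum_XM_q R n) (@EO1' R n)).
  split; [|split].
  + exact: (pack (good_gP s0 s1) ltr01 (gP_1 s) (@lin_XP R n) (@lin_YP R n) (@pos_P R n) (@sum_XP R n) (fun p q => @EPs R n s p q s0 s1)).
  + exact: (pack (good_half (good_gP s0 s1)) (@half_lt1 R) (gP_1 s) (@lin_XM R n) (@lin_XP R n) (@pos_Mp R n) (@sum_XM_p R n) (fun p q => @EOs R n s p q s0 s1)).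
  + exact: (pack (good_half (good_gP s0 s1)) (@half_lt1 R) (gP_1 s) (@lin_XM R n) (@lin_YP R n) (@pos_Mq R n) (@sum_XM_q R n) (fun p q => @EOs' R n s p q s0 s1)).
- have [->|s1] := eqVneq s 1.
    split.
    + exact: (pack (@good_gZ1 R) (@half_lt1 R) (@gZ1_1 R) (@lin_XM R n) (@lin_YP R n) (@pos_Mq R n) (@sum_XM_q R n) (@EZ1 R n)).
    + exact: (pack (@good_gZ1 R) (@half_lt1 R) (@gZ1_1 R) (@lin_XM R n) (@lin_XP R n) (@pos_Mp R n) (@sum_XM_p R n) (@EZ1' R n)).
  split.
  + exact: (pack (good_gZ s0 s4 s1) (@half_lt1 R) (gZ_1 s) (@lin_XM R n) (@lin_YP R n) (@pos_Mq R n) (@sum_XM_q R n) (fun p q => @EZs R n s p q s1)).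
  + exact: (pack (good_gZ s0 s4 s1) (@half_lt1 R) (gZ_1 s) (@lin_XM R n) (@lin_XP R n) (@pos_Mp R n) (@sum_XM_p R n) (fun p q => @EZs' R n s p q s1)).
Qed.
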